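(* Let $G$ and $H$ be graphs. Suppose that for every vertex $v \in V(H)$ there exists a subgraph embedding $\varphi_v$ of $H$ into $G$ that is induced with respect to $v$. Then $G \xrightarrow{\cap} H$.
   Context: All graphs are finite and simple. For graphs $G_1=(V_1,E_1)$, $G_2=(V_2,E_2)$, their intersection is $G_1\cap G_2=(V_1\cap V_2, E_1\cap E_2)$. For a graph $G=(V,E)$ and an injective map $\alpha$ defined on $V$, $G^{\alpha}$ is the graph with vertex set $\{\alpha(v): v\in V\}$ and edge set $\{\{\alpha(v),\alpha(w)\}: \{v,w\}\in E\}$. We write $G\xrightarrow{\cap} H$ ($H$ is a self-intersection, or si-subgraph, of $G$) if there exist $k\ge 1$ and injective maps $\alpha_1,\dots,\alpha_k$ on $V(G)$ with $H=G^{\alpha_1}\cap\cdots\cap G^{\alpha_k}$; when $H$ is only specified up to isomorphism, this means $H$ is isomorphic to such an intersection. A subgraph embedding of $H$ into $G$ is an injective map $\varphi: V(H)\to V(G)$ such that $\varphi(u)\varphi(w)\in E(G)$ whenever $uw\in E(H)$. It is induced with respect to $v\in V(H)$ if $\varphi(N_H(v)) = N_G(\varphi(v))\cap \varphi(V(H))$. *)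

(* Defs.v *)
From mathcomp Require Import all_boot.
Set Implicit Arguments. Unset Strict Implicit. Unset Printing Implicit Defensive.

Definition simple_graph (V : finType) (e : rel V) : Prop :=
  symmetric e /\ irreflexive e.

Definition nbhd (V : finType) (e : rel V) (v : V) : {set V} := [set x | e v x].

Definition subgraph_embedding (W V : finType) (h : rel W) (g : rel V)
    (phi : W -> V) : Prop :=
  injective phi /\ (forall u w, h u w -> g (phi u) (phi w)).

Definition induced_wrt (W V : finType) (h : rel W) (g : rel V)
    (phi : W -> V) (v : W) : Prop :=
  phi @: nbhd h v = nbhd g (phi v) :&: [set phi u | u : W].

Definition img_vertices (V U : finType) (alpha : V -> U) : {set U} :=
  [set alpha v | v : V].
Definition img_edge (V U : finType) (g : rel V) (alpha : V -> U) (x y : U) : bool :=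
  [exists v, exists w, [&& g v w, alpha v == x & alpha w == y]].

(* Intersection G^{alpha_1} ∩ ... ∩ G^{alpha_k} (k >= 1 enforced separately). *)
Definition inter_vertices (V U : finType) (k : nat) (alpha : 'I_k -> V -> U) : {set U} :=
  \bigcap_(i < k) img_vertices (alpha i).
Definition inter_edge (V U : finType) (g : rel V) (k : nat) (alpha : 'I_k -> V -> U)
    (x y : U) : bool :=
  [forall i, img_edge g (alpha i) x y].

(* G -->∩ H : H is isomorphic to an intersection of k >= 1 injective copies of G.
   The copies live in an (existentially chosen) finite ambient vertex type U. *)
Definition si_subgraph (V : finType) (g : rel V) (W : finType) (h : rel W) : Prop :=
  exists (U : finType) (k : nat) (alpha : 'I_k -> V -> U),
    [/\ (0 < k)%N,
        (forall i, injective (alpha i)) &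
        exists f : W -> U,
          [/\ injective f,
              [set f w | w : W] = inter_vertices alpha &
              forall u w, h u w = inter_edge g alpha (f u) (f w)]].

(* Main.v *)
Require Import Defs.
From mathcomp Require Import all_boot.
From Stdlib Require Import ClassicalEpsilon.

Theorem mainTheorem1 (V : finType) (g : rel V) (W : finType) (h : rel W) :
  simple_graph g -> simple_graph h ->
  (forall v : W, exists phi : W -> V,
      subgraph_embedding h g phi /\ induced_wrt h g phi v) ->
  si_subgraph g h.
Proof.
move=> [gsym girr] [hsym hirr] Hphi.
have [phi Hp] : exists phi : W -> W -> V, forall v,
    subgraph_embedding h g (phi v) /\ induced_wrt h g (phi v) v.
  exists (fun v => proj1_sig (constructive_indefinite_description _ (Hphi v))).
  move=> v; exact: proj2_sig (constructive_indefinite_description _ (Hphi v)).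
have [psi0 Hpsi0] : exists psi0 : W -> V, subgraph_embedding h g psi0.
  case: (pickP (fun _ : W => true)) => [w0 _|Hn].
    by exists (phi w0); exact: (Hp w0).1.
  have F (w : W) : False by have := Hn w.
  exists (fun w => False_rect V (F w)); split; first by move=> a; case: (F a).
  by move=> a; case: (F a).
pose I : finType := (option W * bool)%type.
pose psi (i : I) : W -> V := if i.1 is Some v then phi v else psi0.
have Hpsi : forall i, subgraph_embedding h g (psi i).
  by case=> [[v|] b]; [exact (Hp v).1 | exact Hpsi0].
pose alpha0 (i : I) (x : V) : (W + (I * V))%type :=
  if [pick w | psi i w == x] is Some w then inl w else inr (i, x).
have Ka : forall i x u, (alpha0 i x == inl u) = (x == psi i u).
  move=> i x u; rewrite /alpha0; case: pickP => [w /eqP <-|Hn] /=.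
    apply/eqP/eqP; first by case=> ->.
    by move/(Hpsi i).1 => ->.
  by have := Hn u; rewrite /= eq_sym => ->.
have Kr : forall i x p, alpha0 i x = inr p -> p.1 = i.
  move=> i x p; rewrite /alpha0; case: pickP => [w _|_] //= [<-] //.
have alpha_inj : forall i, injective (alpha0 i).
  move=> i x y; rewrite /alpha0.
  case: pickP => [w /eqP <-|Hn1]; case: pickP => [w' /eqP <-|Hn2] //.
  - by case=> ->.
  - by case=> ->.
pose k := #|I|.
pose alpha (j : 'I_k) := alpha0 (enum_val j).
have Kf : forall P : I -> bool, [forall j : 'I_k, P (enum_val j)] = [forall i, P i].
  move=> P; apply/forallP/forallP => H i //.
  by have := H (enum_rank i); rewrite enum_rankK.
have Kimg : forall i u w, img_edge g (alpha0 i) (inl u) (inl w) = g (psi i u) (psi i w).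
  move=> i u w; apply/existsP/idP.
    by case=> a /existsP [b /and3P [Hab]]; rewrite !Ka => /eqP Ea /eqP Eb; rewrite -Ea -Eb.
  by move=> H; exists (psi i u); apply/existsP; exists (psi i w); rewrite H !Ka !eqxx.
exists (W + (I * V))%type, k, alpha; split.
- by rewrite /k card_prod card_option card_bool muln2.
- by move=> j; apply: alpha_inj.
exists inl; split.
- by move=> a b [].
- apply/setP => z; apply/imsetP/bigcapP.
    case=> w _ -> j _; apply/imsetP; exists (psi (enum_val j) w) => //.
    by apply/esym/eqP; rewrite Ka.
  case: z => [w|[i x]] H; first by exists w.
  pose i' : I := (i.1, ~~ i.2).
  have := H (enum_rank i') isT; case/imsetP => y _.
  rewrite /alpha enum_rankK => /esym E.
  have := Kr _ _ _ E => /= /(congr1 snd) /=.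
  by case: (i.2).
- move=> u w; rewrite /inter_edge.
  under eq_forallb => j do rewrite /alpha Kimg.
  rewrite (Kf (fun i => g (psi i u) (psi i w))).
  apply/idP/forallP => [Huw i|H]; first exact: (Hpsi i).2.
  have := H (Some u, true); rewrite /psi /= => Hg.
  have [_ Hind] := Hp u.
  have : phi u w \in nbhd g (phi u u) :&: [set phi u x | x : W].
    by rewrite inE [_ \in nbhd _ _]inE Hg; apply/imsetP; exists w.
  rewrite -Hind => /imsetP [x]; rewrite inE => Hux /((Hp u).1.1) ->.
  exact: Hux.
Qed.
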